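(* Let $(\Omega,\mathcal F,\mathbb P)$ be a probability space carrying a group of measurable bijections $\{\theta_n\}_{n\in\mathbb Z}$ each preserving $\mathbb P$, and let $\{a_n\}_{n\in\mathbb Z}$ be i.i.d. random variables with values in $\{1,2,\dots\}$, compatible with the flow, with $\mathbb E[a_0]<\infty$ and $\mathbb P[a_0=1]>0$. Let $N_n=\#\{m\in\mathbb Z: m<n,\ m+a_m>n\}+1$ and $\Psi^o=\{m\in\mathbb Z:N_m=1\}$. Then under the Palm probability $\mathbb P_{\Psi^o}[\cdot]=\mathbb P[\cdot\mid 0\in\Psi^o]=\mathbb P[\cdot\mid N_0=1]$, the sequence $\{a_n\}_{n<0}$ is independent of $\{a_n\}_{n\ge 0}$.
   Context: A flow-compatible sequence means $a_n(\omega)=a_0(\theta_n\omega)$ for all $n$. The event $\{0\in\Psi^o\}$ has positive probability under these assumptions, so the conditional probability is well defined. *)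

(* Defs.v *)
From HB Require Import structures.
From mathcomp Require Import all_boot all_order all_algebra.
From mathcomp Require Import all_classical all_reals all_analysis.
Set Implicit Arguments. Unset Strict Implicit. Unset Printing Implicit Defensive.
Import Order.TTheory GRing.Theory Num.Theory.
Local Open Scope classical_set_scope.
Local Open Scope ring_scope.

Section Defs.
Context (d : measure_display) (T : measurableType d) (R : realType).

Definition gen_sigma (a : int -> T -> nat) (I : set int) : set (set T) :=
  <<s \bigcup_(n in I) [set a n @^-1` B | B in [set: set nat]] >>.

(* { m : m < n, m + a_m > n } ; N_n = #(this set) + 1 *)
Definition Nset (a : int -> T -> nat) (n : int) (w : T) : set int :=
  [set m | m < n /\ n < m + (a m w)%:Z].

Definition N_is_one (a : int -> T -> nat) (n : int) (w : T) : Prop :=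
  Nset a n w = set0.

Definition Psio (a : int -> T -> nat) (w : T) : set int :=
  [set m | N_is_one a m w].

Definition mutually_indep (P : probability T R) (a : int -> T -> nat) : Prop :=
  forall (s : seq int) (B : int -> set nat), uniq s ->
    (forall n, measurable (a n @^-1` B n)) ->
    fine (P (\bigcap_(n in [set` s]) a n @^-1` B n)) =
    \prod_(n <- s) fine (P (a n @^-1` B n)).

Definition ident_distr (P : probability T R) (a : int -> T -> nat) : Prop :=
  forall n (B : set nat), P (a n @^-1` B) = P (a 0 @^-1` B).

Definition condP (P : probability T R) (C A : set T) : R :=
  fine (P (A `&` C)) / fine (P C).

End Defs.

(* Main.v *)
Require Import Defs.
From HB Require Import structures.
From mathcomp Require Import all_boot all_order all_algebra.
From mathcomp Require Import all_classical all_reals all_analysis.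
From mathcomp Require Import ring lra zify.
Import Order.TTheory GRing.Theory Num.Theory.
Local Open Scope classical_set_scope.
Local Open Scope ring_scope.

Definition piS {T : Type} (a : int -> T -> nat) (I : set int) : set (set T) :=
  [set X | exists s : seq int, exists B : int -> set nat,
     (forall n, n \in s -> I n) /\ X = \bigcap_(n in [set` s]) a n @^-1` B n].

Lemma piS_setI (T : Type) (a : int -> T -> nat) (I : set int) : setI_closed (piS a I).
Proof.
move=> X Y [s [B [sI ->]]] [s' [B' [sI' ->]]].
exists (s ++ s'), (fun n => (if n \in s then B n else setT) `&` (if n \in s' then B' n else setT)).
split.
  by move=> n; rewrite mem_cat => /orP[/sI|/sI'].
apply/seteqP; split => w /=.
  move=> [h1 h2] n /=; rewrite mem_cat => hn.
  split; [case: ifP => // ns; exact: h1|case: ifP => // ns; exact: h2].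
move=> h; split => n /= ns.
  have hn : n \in s ++ s' by rewrite mem_cat ns.
  by have [] := h n hn; rewrite ns.
have hn : n \in s ++ s' by rewrite mem_cat ns orbT.
by have [_] := h n hn; rewrite ns.
Qed.

Lemma gen_piS (d : measure_display) (T : measurableType d) (a : int -> T -> nat) (I : set int) :
  gen_sigma a I `<=` <<s piS a I >>.
Proof.
apply: sub_smallest2r; first exact: smallest_sigma_algebra.
move=> X [n In [B _ <-]].
exists [:: n], (fun _ => B); split.
  by move=> m; rewrite inE => /eqP ->.
apply/seteqP; split => w /=.
  by move=> h m; rewrite /= inE => /eqP ->.
by move=> h; apply: (h n); rewrite /= inE eqxx.
Qed.

Section Indep.
Variables (d : measure_display) (T : measurableType d) (R : realType).
Variables (P : probability T R) (a : int -> T -> nat).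
Hypothesis a_meas : forall n (B : set nat), measurable (a n @^-1` B).
Hypothesis a_indep : mutually_indep P a.

Lemma fineP X : measurable X -> P X = (fine (P X))%:E.
Proof. by move=> mX; rewrite fineK // fin_num_measure. Qed.

Lemma bigcap_undup (s : seq int) (F : int -> set T) :
  \bigcap_(n in [set` s]) F n = \bigcap_(n in [set` undup s]) F n.
Proof. by congr bigcap; apply/seteqP; split => n /=; rewrite mem_undup. Qed.

Lemma mbigcap_seq (s : seq int) (F : int -> set T) :
  (forall n, measurable (F n)) -> measurable (\bigcap_(n in [set` s]) F n).
Proof.
move=> mF; rewrite bigcap_seq; elim: s => [|x s IH].
  by rewrite big_nil; exact: measurableT.
by rewrite big_cons; apply: measurableI.
Qed.

Lemma piS_meas I X : piS a I X -> measurable X.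
Proof.
move=> [s [B [_ ->]]]; apply: mbigcap_seq => n; exact: a_meas.
Qed.

Lemma piS_indep X Y : piS a [set n | n < 0] X -> piS a [set n | 0 <= n] Y ->
  P (X `&` Y) = (P X * P Y)%E.
Proof.
move=> [s [B [sI ->]]] [s' [B' [sI' ->]]].
rewrite (bigcap_undup s) (bigcap_undup s').
have uI : forall n, n \in undup s -> n < 0 by move=> n; rewrite mem_undup => /sI.
have uI' : forall n, n \in undup s' -> 0 <= n by move=> n; rewrite mem_undup => /sI'.
set u := undup s; set u' := undup s'.
pose BB n := if n < 0 then B n else B' n.
have hX := @a_indep u B (undup_uniq s) (fun n => a_meas n (B n)).
have hY := @a_indep u' B' (undup_uniq s') (fun n => a_meas n (B' n)).
have uu : uniq (u ++ u').
  rewrite cat_uniq !undup_uniq /= andbT; apply/hasPn => n /uI' h.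
  by apply/negP => /uI; rewrite ltNge h.
have hXY := @a_indep (u ++ u') BB uu (fun n => a_meas n (BB n)).
have -> : (\bigcap_(n in [set` u]) a n @^-1` B n) `&`
          (\bigcap_(n in [set` u']) a n @^-1` B' n) =
          \bigcap_(n in [set` u ++ u']) a n @^-1` BB n.
  apply/seteqP; split => w /=.
    move=> [h1 h2] n /=; rewrite mem_cat => /orP[nu|nu].
      by rewrite /BB (uI n nu); exact: h1.
    by rewrite /BB ltNge (uI' n nu); exact: h2.
  move=> h; split => n /= nu.
    have hn : n \in u ++ u' by rewrite mem_cat nu.
    by have := h n hn; rewrite /BB (uI n nu).
  have hn : n \in u ++ u' by rewrite mem_cat nu orbT.
  by have := h n hn; rewrite /BB ltNge (uI' n nu).
have m1 := mbigcap_seq u _ (fun n => a_meas n (B n)).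
have m2 := mbigcap_seq u' _ (fun n => a_meas n (B' n)).
have m3 := mbigcap_seq (u ++ u') _ (fun n => a_meas n (BB n)).
rewrite (fineP _ m1) (fineP _ m2) (fineP _ m3).
rewrite hXY hX hY big_cat /= -EFinM; congr (_ * _)%:E.
  by apply: eq_big_seq => n nu; rewrite /BB (uI n nu).
by apply: eq_big_seq => n nu; rewrite /BB ltNge (uI' n nu).
Qed.

Lemma Pfin X : measurable X -> (P X < +oo)%E.
Proof. by move=> mX; rewrite (fineP _ mX) ltry. Qed.

Definition HY (Y : set T) : set (set T) :=
  [set X | measurable X /\ P (X `&` Y) = (P X * P Y)%E].

Lemma HY_lambda Y : measurable Y -> lambda_system setT (HY Y).
Proof.
move=> mY; split.
- by [].
- by split; [exact: measurableT| rewrite setTI probability_setT mul1e].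
- move=> A B BA [mA hA] [mB hB]; split; first exact: measurableD.
  have -> : (A `\` B) `&` Y = (A `&` Y) `\` (B `&` Y).
    by apply/seteqP; split => w /=; [move=> [[? ?] ?]; split => // -[]|move=> [[? ?] h]; split => //; split => // ?; apply: h].
  have sAY : A `&` Y `&` (B `&` Y) = B `&` Y.
    by apply/seteqP; split => w /=; [move=> [[? ?] [? ?]]|move=> [? ?]; split; [split => //; exact: BA|]].
  have sAB : A `&` B = B by apply/seteqP; split => w /=; [move=> []|move=> ?; split => //; exact: BA].
  have e1 : P ((A `&` Y) `\` (B `&` Y)) = (P (A `&` Y) - P (B `&` Y))%E.
    rewrite measureD //; [|exact: measurableI|exact: measurableI|apply: Pfin; exact: measurableI].
    by rewrite sAY.
  have e2 : P (A `\` B) = (P A - P B)%E.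
    by rewrite measureD //; [rewrite sAB|exact: Pfin].
  rewrite e1 e2.
  have hA' : P (A `&` Y) = (P A * P Y)%E := hA.
  have hB' : P (B `&` Y) = (P B * P Y)%E := hB.
  rewrite hA' hB' (fineP _ mA) (fineP _ mB) (fineP _ mY) -!EFinM -!EFinB mulrBl //.
- move=> F ndF hF; have mF n := (hF n).1.
  have mU : measurable (\bigcup_n F n) by exact: bigcupT_measurable.
  split => //.
  have c1 := @nondecreasing_cvg_mu _ _ _ P (fun n => F n `&` Y)
     (fun n => measurableI _ _ (mF n) mY).
  rewrite -setI_bigcupl in c1.
  have ndFY : nondecreasing_seq (fun n => F n `&` Y).
    by move=> n m nm; apply/subsetPset; apply: setSI; apply/subsetPset; exact: ndF.
  have {}c1 := c1 (measurableI _ _ mU mY) ndFY.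
  have c2 := @nondecreasing_cvg_mu _ _ _ P F mF mU ndF.
  have {}c2 := cvgeZr (fin_num_measure P _ mY) c2.
  have e : (P \o (fun n => F n `&` Y)) = (fun n => (P (F n) * P Y)%E).
    by apply: funext => n /=; rewrite (hF n).2.
  rewrite e in c1.
  exact: (cvg_unique _ c1 c2).
Qed.

Lemma gen_meas I : gen_sigma a I `<=` measurable.
Proof.
apply: smallest_sub; first exact: sigma_algebra_measurable.
move=> _ [n _ [B _ <-]]; exact: a_meas.
Qed.

Lemma indep_gen X Y : gen_sigma a [set n | n < 0] X ->
  gen_sigma a [set n | 0 <= n] Y -> P (X `&` Y) = (P X * P Y)%E.
Proof.
have step1 : forall Y, piS a [set n | 0 <= n] Y ->
    forall X, gen_sigma a [set n | n < 0] X -> HY Y X.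
  move=> Y0 hY0 X0 /gen_piS hX0.
  have := (@lambda_system_subset _ _ (@piS_setI _ a [set n | n < 0]) setT _ (HY_lambda _ (piS_meas _ _ hY0))).
  apply => //.
  move=> Z hZ; split; [exact: piS_meas _ _ hZ|exact: piS_indep _ _ hZ hY0].
move=> hX /gen_piS hY.
have mX := gen_meas _ _ hX.
suff : HY X Y by move=> [_ h]; rewrite setIC muleC.
apply: (@lambda_system_subset _ _ (@piS_setI _ a [set n | 0 <= n]) setT _ (HY_lambda _ mX)) => //.
move=> Z hZ; split; first exact: piS_meas _ _ hZ.
by have [_ h] := step1 Z hZ X hX; rewrite setIC muleC.
Qed.
End Indep.
Section Sig.
Variables (T : Type) (G : set (set T)).
Hypothesis sG : sigma_algebra setT G.

Lemma sigC A : G A -> G (~` A).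
Proof. by move=> GA; rewrite -setTD; case: sG => _ h _; exact: h. Qed.

Lemma sigU A B : G A -> G B -> G (A `|` B).
Proof.
move=> GA GB; rewrite -bigcup2E; case: sG => G0 _ h; apply: h => -[|[|n]] //=.
Qed.

Lemma sigI A B : G A -> G B -> G (A `&` B).
Proof.
move=> GA GB; rewrite -(setCK (A `&` B)) setCI; apply: sigC; apply: sigU; exact: sigC.
Qed.

Lemma sigcap (F : (set T)^nat) : (forall n, G (F n)) -> G (\bigcap_n F n).
Proof.
move=> GF; rewrite -(setCK (\bigcap_n F n)) setC_bigcap; apply: sigC.
case: sG => _ _ h; apply: h => n; exact: sigC.
Qed.
End Sig.

Lemma C_gen (d : measure_display) (T : measurableType d) (a : int -> T -> nat) :
  gen_sigma a [set n | n < 0] [set w | Psio a w (0:int)].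
Proof.
have -> : [set w | Psio a w (0:int)] =
   \bigcap_(k : nat) (a (- (k.+1)%:Z) @^-1` [set j | (j <= k.+1)%N]).
  apply/seteqP; split => w /=.
    move=> h k _ /=; rewrite leqNgt; apply/negP => hk.
    have : Nset a 0 w (- (k.+1)%:Z) by split => //; lia.
    by rewrite /Psio /N_is_one /= in h; rewrite h.
  move=> h; rewrite /Psio /N_is_one /=; apply/seteqP; split => // m [m0 hm].
  case: m m0 hm => [k|k] //= _; rewrite NegzE => hm.
  have := h k I; rewrite /= => hk; lia.
apply: sigcap; first exact: smallest_sigma_algebra.
move=> k; apply: sub_sigma_algebra.
by exists (- (k.+1)%:Z) => //; exists [set j | (j <= k.+1)%N].
Qed.
Theorem mainTheorem2 (d : measure_display) (T : measurableType d) (R : realType)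
  (P : probability T R) (theta : int -> T -> T) (a : int -> T -> nat)
  (* group of measurable bijections preserving P *)
  (theta_meas : forall n, measurable_fun setT (theta n))
  (theta0 : forall w, theta 0 w = w)
  (thetaD : forall n m w, theta (n + m) w = theta n (theta m w))
  (theta_pres : forall n (A : set T), measurable A ->
     P (theta n @^-1` A) = P A)
  (* the a_n are random variables with values in {1,2,...} *)
  (a_meas : forall n (B : set nat), measurable (a n @^-1` B))
  (a_pos : forall n w, (0 < a n w)%N)
  (* i.i.d. *)
  (a_indep : mutually_indep P a)
  (a_ident : ident_distr P a)
  (* compatible with the flow *)
  (a_flow : forall n w, a n w = a 0 (theta n w))
  (* E[a_0] < oo and P[a_0 = 1] > 0 *)
  (a_int : (\int[P]_w ((a (0:int) w)%:R : R)%:E < +oo)%E)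
  (a_one : (0 < P (a (0:int) @^-1` [set 1%N]))%E) :
  let C := [set w | Psio a w (0 : int)] in
  forall A B : set T,
    gen_sigma a [set n | n < 0] A ->
    gen_sigma a [set n | 0 <= n] B ->
    condP P C (A `&` B) = condP P C A * condP P C B.
Proof.
move=> C A B hA hB.
have sig := @smallest_sigma_algebra _ setT (\bigcup_(n in [set n : int | n < 0]) [set a n @^-1` B0 | B0 in [set: set nat]]).
have hC : gen_sigma a [set n | n < 0] C := @C_gen _ _ a.
have hAC : gen_sigma a [set n | n < 0] (A `&` C) := @sigI _ _ sig A C hA hC.
have mA := @gen_meas _ _ a a_meas _ _ hA.
have mB := @gen_meas _ _ a a_meas _ _ hB.
have mC := @gen_meas _ _ a a_meas _ _ hC.
have mAC := @gen_meas _ _ a a_meas _ _ hAC.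
have ind := @indep_gen _ _ _ P a a_meas a_indep.
have h1 : fine (P (A `&` B `&` C)) = fine (P (A `&` C)) * fine (P B).
  have -> : A `&` B `&` C = (A `&` C) `&` B.
    by apply/seteqP; split => w /= [[? ?] ?].
  by rewrite ind // fineM // fin_num_measure.
have h2 : fine (P (B `&` C)) = fine (P C) * fine (P B).
  by rewrite setIC ind // fineM // fin_num_measure.
rewrite /condP h1 h2.
have [->|nz] := eqVneq (fine (P C)) 0; first by rewrite invr0 !mulr0.
by field.
Qed.
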